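(* For every integer $n\ge2$, $\hat E_{2,n}(q)=\sum_{i=0}^{n-2}\binom{n}{i+2}q^i$.
   Context: Place $1,\dots,n$ clockwise on a circle. Distinct $p_1,\dots,p_m$ are in clockwise cyclic order if $(p_2-p_1)\bmod n<\dots<(p_m-p_1)\bmod n$ (residues in $\{0,\dots,n-1\}$). For $\pi\in S_n$ (fixed points regarded as ''counterclockwise loops''), an ordered pair $(i,j)$, $i\ne j$, is aligned if $\pi(j)\ne j$, the entries of $(i,\pi(i),\pi(j),j)$ are pairwise distinct except that possibly $i=\pi(i)$, and the distinct entries in this order are in clockwise cyclic order. An alignment is an unordered pair $\{i,j\}$ with $(i,j)$ or $(j,i)$ aligned; $\mathrm{al}(\pi)$ is their number. A weak excedence of $\pi$ is an $i$ with $\pi(i)\ge i$. $E_{k,n}(q)=\sum q^{k(n-k)-\mathrm{al}(\pi)}$ over $\pi\in S_n$ with exactly $k$ weak excedences, and $\hat E_{k,n}(q)=q^{k-n}E_{k,n}(q)$. *)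

(* Defs.v *)
From mathcomp Require Import all_boot all_order all_algebra all_fingroup.
Set Implicit Arguments. Unset Strict Implicit. Unset Printing Implicit Defensive.
Import GRing.Theory.

(* Points 1..n on the circle are represented by 0..n-1 (i : 'I_n stands for i+1);
   this shift does not change differences modulo n, nor the order i <= pi i. *)

Definition cres (n : nat) (p1 p : nat) : nat := (p + n - p1) %% n.

(* p_1, ..., p_m (assumed distinct) are in clockwise cyclic order:
   (p_2 - p_1) mod n < ... < (p_m - p_1) mod n *)
Definition clockwise (n : nat) (s : seq nat) : bool :=
  match s with
  | [::] => true
  | p1 :: t => sorted ltn (map (cres n p1) t)
  end.

Definition aligned (n : nat) (pi : 'S_n) (i j : 'I_n) : bool :=
  [&& i != j, pi j != j,
      [&& i != pi j, pi i != pi j, pi i != j & pi j != j] &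
      clockwise n (if i == pi i then [:: val i; val (pi j); val j]
                   else [:: val i; val (pi i); val (pi j); val j])].

Definition al (n : nat) (pi : 'S_n) : nat :=
  #|[set ij : 'I_n * 'I_n | (val ij.1 < val ij.2)%N &&
                            (aligned pi ij.1 ij.2 || aligned pi ij.2 ij.1)]|.

Definition wex (n : nat) (pi : 'S_n) : nat := #|[set i : 'I_n | (val i <= val (pi i))%N]|.

Local Open Scope ring_scope.

(* E_{k,n}(q), evaluated at a nonzero q in a field (Laurent exponents as ints) *)
Definition Ekn (R : unitRingType) (k n : nat) (q : R) : R :=
  \sum_(pi : 'S_n | wex pi == k) q ^ ((k * (n - k))%N%:Z - (al pi)%:Z).

Definition hatEkn (R : unitRingType) (k n : nat) (q : R) : R :=
  q ^ (k%:Z - n%:Z) * Ekn k n q.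

(* Main.v *)
Require Import Defs.
From mathcomp Require Import all_boot all_order all_algebra all_fingroup.
From mathcomp Require Import zify.
Set Implicit Arguments. Unset Strict Implicit. Unset Printing Implicit Defensive.
Import GRing.Theory.

Lemma cresP n x y : x < n -> y < n ->
  (x <= y /\ cres n x y = y - x) \/ (y < x /\ cres n x y = y + n - x).
Proof.
move=> xn yn; rewrite /cres; case: (leqP x y) => h; [left|right]; split => //.
  have -> : y + n - x = (y - x) + n by lia.
  by rewrite modnDr modn_small //; lia.
by rewrite modn_small //; lia.
Qed.

Lemma ord_predP n (z : 'I_n) :
  (nat_of_ord z = 0 /\ nat_of_ord (ord_pred z) = n - 1) \/ (0 < nat_of_ord z /\ nat_of_ord (ord_pred z) = nat_of_ord z - 1).
Proof.
have zn := ltn_ord z; rewrite /ord_pred /=.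
case: (posnP (nat_of_ord z)) => h; [left|right]; split => //.
  by rewrite h add0n modn_small; lia.
have -> : (z + n).-1 = (z - 1) + n by lia.
by rewrite modnDr modn_small; lia.
Qed.

Lemma ordSP n (z : 'I_n) :
  (nat_of_ord z = n - 1 /\ nat_of_ord (ordS z) = 0) \/ (nat_of_ord z < n - 1 /\ nat_of_ord (ordS z) = nat_of_ord z + 1).
Proof.
have zn := ltn_ord z; rewrite /ordS /=.
case: (ltnP (nat_of_ord z) (n - 1)) => h; [right|left]; split => //; try lia.
  by rewrite modn_small; lia.
have -> : z.+1 = n by lia.
by rewrite modnn.
Qed.

Definition AL n (vi pii vj pij : nat) : bool :=
  [&& vi != vj, pij != vj, vi != pij, pii != pij, pii != vj &
   (if vi == pii then cres n vi pij < cres n vi vj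
    else (cres n vi pii < cres n vi pij) && (cres n vi pij < cres n vi vj))].

Lemma alignedE n (pi : 'S_n) (i j : 'I_n) :
  aligned pi i j = AL n i (pi i) j (pi j).
Proof.
rewrite /aligned /AL /=.
have -> : ((i:nat) == pi i) = (i == pi i) by [].
have -> : ((i:nat) == j) = (i == j) by [].
have -> : ((pi j:nat) == j) = (pi j == j) by [].
have -> : ((i:nat) == pi j) = (i == pi j) by [].
have -> : ((pi i:nat) == pi j) = (pi i == pi j) by [].
have -> : ((pi i:nat) == j) = (pi i == j) by [].
case: (i == pi i); case: (i == j); case: (pi j == j); case: (i == pi j);
  case: (pi i == pi j); case: (pi i == j). all: by rewrite /= ?andbT.
Qed.

Definition rot n (S : {set 'I_n}) (x : 'I_n) : 'I_n :=
  if x \in S then [arg max_(y > x in S) cres n x y] else x.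

Lemma rotP n (S : {set 'I_n}) x : x \in S ->
  rot S x \in S /\ forall y, y \in S -> cres n x y <= cres n x (rot S x).
Proof.
move=> xS; rewrite /rot xS; case: (@arg_maxnP _ x (mem S) (fun y : 'I_n => cres n x y) xS) => y yS H.
by split => // z zS; apply: H.
Qed.

Lemma rot_out n (S : {set 'I_n}) x : x \notin S -> rot S x = x.
Proof. by rewrite /rot => /negbTE ->. Qed.

Lemma cresB n (x y : 'I_n) : x < n /\ y < n /\
  ((x <= y /\ cres n x y = y - x) \/ (y < x /\ cres n x y = y + n - x)).
Proof. by split => //; split => //; exact: cresP (ltn_ord x) (ltn_ord y). Qed.

Lemma ord_neq n (x y : 'I_n) : x != y -> (x : nat) <> y.
Proof. by move=> /eqP ne E; apply: ne; apply: val_inj. Qed.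

Lemma rot_neq n (S : {set 'I_n}) x : 1 < #|S| -> x \in S -> (rot S x : nat) <> x.
Proof.
move=> cS xS.
have [y /setD1P [yx yS]] : exists y, y \in S :\ x.
  apply/card_gt0P; rewrite (cardsD1 x S) xS in cS; lia.
have [rS H] := rotP xS; have := H y yS.
have := cresB x y; have := cresB x (rot S x); have := ord_neq yx; lia.
Qed.

Lemma rot_inj n (S : {set 'I_n}) : injective (rot S).
Proof.
move=> x1 x2.
case x1S: (x1 \in S); case x2S: (x2 \in S).
- have [r1S H1] := rotP x1S; have [r2S H2] := rotP x2S => E.
  have h1 := H1 x2 x2S; have h2 := H2 x1 x1S; rewrite E in h1.
  apply: ord_inj.
  have := cresB x1 x2; have := cresB x2 x1; have := cresB x1 (rot S x2);
  have := cresB x2 (rot S x2); lia.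
- have [r1S _] := rotP x1S; rewrite (rot_out (negbT x2S)) => E.
  by rewrite -E r1S in x2S.
- have [r2S _] := rotP x2S; rewrite (rot_out (negbT x1S)) => E.
  by rewrite E r2S in x1S.
- by rewrite (rot_out (negbT x1S)) (rot_out (negbT x2S)).
Qed.

Definition pimk n (S : {set 'I_n}) : 'S_n :=
  perm (inj_comp (@ord_pred_inj n) (@rot_inj n S)).

Lemma pimkE n (S : {set 'I_n}) x : pimk S x = ord_pred (rot S x).
Proof. by rewrite permE. Qed.

Lemma wexE n (pi : 'S_n) : 0 < n -> wex pi = #|[set x : 'I_n | (x : nat) < ordS (pi x)]| + 1.
Proof.
move=> n0; rewrite /wex.
have zl : n.-1 < n by lia.
pose z0 := Ordinal zl.
have E0 : forall y : 'I_n, (y == z0) = ((y:nat) == n.-1) by [].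
have -> : [set i : 'I_n | val i <= val (pi i)] = [set i : 'I_n | (i : nat) <= pi i].
  by apply/setP => i; rewrite !inE.
rewrite -(cardsID (pi @^-1: [set z0]) [set i : 'I_n | (i : nat) <= pi i]).
have -> : [set i : 'I_n | (i : nat) <= pi i] :&: pi @^-1: [set z0] = pi @^-1: [set z0].
  apply/setP => x; rewrite !inE E0.
  have := ltn_ord x; have := ltn_ord (pi x); lia.
have -> : [set i : 'I_n | (i : nat) <= pi i] :\: pi @^-1: [set z0] = [set x : 'I_n | (x : nat) < ordS (pi x)].
  apply/setP => x; rewrite !inE E0.
  have := ltn_ord x; have := ordSP (pi x); lia.
rewrite card_preimset ?cards1; last exact: perm_inj.
rewrite addnC; congr (_ + _); apply: eq_card => x; by rewrite !inE.
Qed.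

Lemma exc_rot n (S : {set 'I_n}) : 1 < #|S| ->
  #|[set x : 'I_n | (x:nat) < rot S x]| = 1.
Proof.
move=> cS.
have [s0 s0S] : exists s0, s0 \in S by apply/card_gt0P; lia.
case: (@arg_minnP _ s0 (mem S) (fun y : 'I_n => (y:nat)) s0S) => m mS Hm.
rewrite (_ : [set x : 'I_n | (x:nat) < rot S x] = [set m]) ?cards1 //.
apply/setP => x; rewrite !inE.
have Em : (x == m) = ((x:nat) == m) by [].
case xS: (x \in S).
- have [rS H] := rotP xS; have := rot_neq cS xS; have := H m mS.
  have := Hm x xS; have := Hm _ rS; have := cresB x m; have := cresB x (rot S x).
  rewrite Em; lia.
- rewrite rot_out ?xS // ltnn; apply/esym/negbTE.
  by apply: (contraFN _ xS) => /eqP ->.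
Qed.

Lemma exc1_rot n (rho : 'I_n -> 'I_n) : injective rho ->
  #|[set x : 'I_n | (x:nat) < rho x]| = 1 ->
  1 < #|[set x | rho x != x]| /\ forall x, rho x = rot [set x | rho x != x] x.
Proof.
move=> rinj c1; set S := [set x | rho x != x].
have [rinv rK Kr] := injF_bij rinj.
have Sin : forall x, (x \in S) = (rho x != x) by move=> x; rewrite inE.
have Sstab : forall x, x \in S -> rho x \in S.
  by move=> x; rewrite !Sin (inj_eq rinj).
have [e eE] : exists e, e \in [set x : 'I_n | (x:nat) < rho x].
  by apply/card_gt0P; lia.
have eS : e \in S.
  rewrite inE in eE; rewrite Sin; apply/eqP => E; rewrite E in eE; lia.
case: (@arg_minnP _ e (mem S) (fun y : 'I_n => (y:nat)) eS) => m mS0 Hm0.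
have mS : m \in S by exact: mS0.
have Hm : forall j, j \in S -> (m : nat) <= j by exact: Hm0.
clear mS0 Hm0.
have rmS := Sstab m mS.
have rmm : (rho m : nat) <> m.
  by move: mS; rewrite Sin => /eqP ne E; apply: ne; apply: ord_inj.
have mexc : (m : nat) < rho m by have := Hm _ rmS; lia.
have only : forall x : 'I_n, (x : nat) < rho x -> x = m.
  move=> x xe.
  have /cards1P [w Ew] : #|[set x : 'I_n | (x:nat) < rho x]| == 1 by rewrite c1.
  have : m \in [set x : 'I_n | (x:nat) < rho x] by rewrite inE.
  have : x \in [set x : 'I_n | (x:nat) < rho x] by rewrite inE.
  by rewrite Ew !inE => /eqP -> /eqP ->.
have desc : forall x : 'I_n, x \in S -> x != m -> (rho x : nat) < x.
  move=> x xS xm.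
  have rxx : (rho x : nat) <> x.
    by move: xS; rewrite Sin => /eqP ne E; apply: ne; apply: ord_inj.
  case: (ltnP x (rho x)) => h; last by move: rxx h; clear; lia.
  by have := only x h; move/eqP: xm.
split.
  have := subset_leq_card (_ : [set m; rho m] \subset S).
  rewrite cards2.
  have -> : (m != rho m) by apply/eqP => E; apply: rmm; rewrite -E.
  apply.
  by apply/subsetP => z; rewrite in_set2 => /orP [] /eqP ->.
have gap : forall x : 'I_n, x \in S -> x != m -> forall y, y \in S ->
    ~ ((rho x : nat) < y /\ (y : nat) < x).
  move=> x xS xm y yS [h1 h2].
  pose T := [set z in S | (z : nat) <= y].
  have mT : m \in T by rewrite inE mS /=; exact: Hm.
  have yT : y \in T by rewrite inE yS /=.
  have xT : x \notin T by rewrite inE negb_and; apply/orP; right; rewrite -ltnNge.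
  have sub : rho @: (x |: (T :\ m)) \subset T :\ y.
    apply/subsetP => _ /imsetP [z zD ->].
    move: zD; rewrite in_setU1 => /orP [/eqP -> | ].
      rewrite in_setD1 in_set Sstab //=; apply/andP; split; last exact: ltnW.
      by apply/eqP => E; rewrite E ltnn in h1.
    rewrite in_setD1 in_set => /andP [zm /andP [zS zy]].
    have := desc z zS zm.
    rewrite in_setD1 in_set Sstab //= => hz; apply/andP; split.
      by apply/eqP => E; move: hz zy; rewrite E => a b; have := leq_trans a b; rewrite ltnn.
    exact: ltnW (leq_trans hz zy).
  have := subset_leq_card sub.
  rewrite card_imset // cardsU1 in_setD1 (negbTE xT) andbF /=.
  have := cardsD1 m T; have := cardsD1 y T; rewrite mT yT /= => A B C.
  clear -A B C; lia.
have [M MS0 HM0] := @arg_maxnP _ e (mem S) (fun y : 'I_n => (y:nat)) eS.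
have MS : M \in S by exact: MS0.
have HM : forall j, j \in S -> (j : nat) <= M by exact: HM0.
clear MS0 HM0.
have rmM : rho m = M.
  have zS : rinv M \in S.
    apply: contraT; rewrite Sin negbK => /eqP E.
    rewrite Kr in E; by move: MS; rewrite Sin {1}E Kr eqxx.
  case: (eqVneq (rinv M) m) => [E|ne].
    by rewrite -E Kr.
  have := desc _ zS ne; rewrite Kr.
  have := HM _ zS => a b; clear -a b; lia.
move=> x.
case xS: (x \in S); last first.
  by rewrite rot_out ?xS //; move: xS; rewrite Sin => /negbFE /eqP.
have [rS H] := rotP xS.
have maxr : forall y, y \in S -> cres n x y <= cres n x (rho x).
  move=> y yS.
  case: (eqVneq x m) => [->|xm].
    have := HM _ yS; have := Hm _ yS; rewrite rmM.
    have := cresB m y; have := cresB m M => a b c d; clear -a b c d; lia.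
  have := gap x xS xm y yS; have := desc x xS xm.
  have := cresB x y; have := cresB x (rho x) => a b c d; clear -a b c d; lia.
apply: ord_inj.
have := maxr _ rS; have := H _ (Sstab _ xS).
have := cresB x (rho x); have := cresB x (rot S x) => a b c d; clear -a b c d; lia.
Qed.


Lemma cresC n (x y : 'I_n) : x < n /\ y < n /\
  ((x <= y /\ cres n x y + x = y) \/ (y < x /\ cres n x y + x = y + n)).
Proof. have := cresB x y; lia. Qed.

Lemma ord_predC n (z : 'I_n) : z < n /\
  ((nat_of_ord z = 0 /\ nat_of_ord (ord_pred z) + 1 = n) \/
   (0 < nat_of_ord z /\ nat_of_ord (ord_pred z) + 1 = z)).
Proof. have := ord_predP z; have := ltn_ord z; lia. Qed.

Lemma aligned_pimk n (S : {set 'I_n}) (s0 : 'I_n) : 1 < #|S| -> s0 \in S ->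
  forall i j, aligned (pimk S) i j =
    (j \notin S) && (i == [arg min_(y < s0 in S) cres n j y]).
Proof.
move=> cS s0S i j.
rewrite alignedE !pimkE.
case: (@arg_minnP _ s0 (mem S) (fun y : 'I_n => cres n j y) s0S) => nx nxS0 Hnx0.
have nxS : nx \in S by exact: nxS0.
have Hnx : forall y, y \in S -> cres n j nx <= cres n j y by exact: Hnx0.
clear nxS0 Hnx0.
have Einx : (i == nx) = ((i:nat) == nx) by [].
have n2 : 1 < n.
  by have := subset_leq_card (subsetT S); rewrite cardsT card_ord => a; clear -a cS; lia.
have bi := ltn_ord i; have bj := ltn_ord j.
have nT : ~~ true = false by [].
have nF : ~~ false = true by [].
case jS: (j \in S); case iS: (i \in S); rewrite ?nT ?nF ?andFb ?andTb.
- have [riS Hi] := rotP iS; have h1 := Hi j jS; have ne := rot_neq cS iS.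
  have p1 := ord_predC (rot S i); have c1 := cresC i (ord_pred (rot S i)).
  have c2 := cresC i (rot S i); have c3 := cresC i (ord_pred (rot S j)).
  have c4 := cresC i j.
  rewrite /AL; apply/negbTE/negP => /and5P [_ _ /eqP e3 _ /andP [_ o]]; move: o.
  case: ifP => [/eqP e0 o | _ /andP [o1 o2]];
    [clear -h1 ne p1 c1 c2 c3 c4 e3 e0 o; lia | clear -h1 ne p1 c1 c2 c3 c4 e3 o1 o2; lia].
- rewrite (rot_out (negbT iS)).
  have p1 := ord_predC i; have c1 := cresC i (ord_pred i).
  have c3 := cresC i (ord_pred (rot S j)).
  rewrite /AL; apply/negbTE/negP => /and5P [_ _ _ _ /andP [_ o]]; move: o.
  case: ifP => [/eqP e0 _ | _ /andP [o1 _]];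
    [clear -n2 p1 c1 e0; lia | clear -n2 p1 c1 c3 o1; lia].
- have [riS Hi] := rotP iS; rewrite (rot_out (negbT jS)).
  have ne := rot_neq cS iS.
  have p1 := ord_predC (rot S i); have p2 := ord_predC j.
  have c1 := cresC i (ord_pred (rot S i)); have c2 := cresC i (rot S i).
  have c3 := cresC i (ord_pred j); have c4 := cresC i j.
  rewrite Einx; apply/idP/idP.
    rewrite /AL => /and5P [_ _ /eqP e3 _ /andP [_ o]]; move: o.
    have h1 := Hi nx nxS; have h2 := Hnx i iS.
    have c5 := cresC i nx; have c6 := cresC j nx; have c7 := cresC j i.
    case: ifP => [/eqP e0 o | _ /andP [o1 o2]];
      [clear -ne p1 p2 c1 c2 c3 c4 c5 c6 c7 h1 h2 e3 e0 o; lia |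
       clear -ne p1 p2 c1 c2 c3 c4 c5 c6 c7 h1 h2 e3 o1 o2; lia].
  move=> /eqP e; have h1 := Hnx _ riS; rewrite -e in h1.
  have c5 := cresC j i; have c6 := cresC j (rot S i).
  have ij : (i : nat) <> j by move=> E; move: jS; rewrite -(ord_inj E) iS.
  rewrite /AL; case: ifP => _;
    clear -n2 ne p1 p2 c1 c2 c3 c4 c5 c6 h1 ij; lia.
- rewrite (rot_out (negbT iS)) (rot_out (negbT jS)).
  have -> : (i == nx) = false by apply/negbTE; apply: contraFN iS => /eqP ->.
  have p1 := ord_predC i; have c1 := cresC i (ord_pred i).
  have c3 := cresC i (ord_pred j).
  rewrite /AL; apply/negbTE/negP => /and5P [_ _ _ _ /andP [_ o]]; move: o.
  case: ifP => [/eqP e0 _ | _ /andP [o1 _]];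
    [clear -n2 p1 c1 e0; lia | clear -n2 p1 c1 c3 o1; lia].
Qed.

Lemma al_pimk n (S : {set 'I_n}) : 1 < #|S| -> al (pimk S) = n - #|S|.
Proof.
move=> cS.
have [s0 s0S] : exists s0, s0 \in S by apply/card_gt0P; lia.
pose nx := fun j : 'I_n => [arg min_(y < s0 in S) cres n j y].
have nxS : forall j, nx j \in S.
  move=> j; rewrite /nx.
  by case: (@arg_minnP _ s0 (mem S) (fun y : 'I_n => cres n j y) s0S).
have PE : forall i j, aligned (pimk S) i j = (j \notin S) && (i == nx j).
  exact: aligned_pimk cS s0S.
have PS : forall i j, aligned (pimk S) i j -> (i \in S) && (j \notin S).
  by move=> i j; rewrite PE => /andP [-> /eqP ->]; rewrite nxS.
pose A := [set ij : 'I_n * 'I_n | aligned (pimk S) ij.1 ij.2].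
pose f := fun ij : 'I_n * 'I_n => if (ij.1 : nat) < ij.2 then ij else (ij.2, ij.1).
have finj : {in A &, injective f}.
  move=> [x1 x2] [y1 y2]; rewrite !inE /f /= => Px Py.
  move: (PS _ _ Px) (PS _ _ Py) => /andP [x1S x2S] /andP [y1S y2S].
  case: ifP => h1; case: ifP => h2 [] E1 E2; try by rewrite E1 E2.
  - by move: x1S; rewrite E1 (negbTE y2S).
  - by move: x2S; rewrite E1 y1S.
rewrite /al.
transitivity #|f @: A|.
  apply: eq_card => [[x1 x2]]; rewrite inE /=; apply/idP/imsetP.
    move=> /andP [h /orP [P1 | P2]].
      by exists (x1, x2); rewrite ?inE //= /f /= h.
    exists (x2, x1); rewrite ?inE //= /f /=.
    by rewrite ltnNge (ltnW h).
  move=> [[y1 y2]]; rewrite inE /= => Py; rewrite /f /=.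
  have := PS _ _ Py => /andP [y1S y2S].
  have ne : (y1 : nat) != y2.
    by apply/eqP => E; move: y2S; rewrite -(ord_inj E) y1S.
  case: ifP => h [-> ->]; first by rewrite h Py.
  rewrite Py orbT andbT; move: h ne; clear; lia.
rewrite card_in_imset //.
have -> : A = (fun j => (nx j, j)) @: ~: S.
  apply/setP => [[x1 x2]]; rewrite inE /= PE; apply/idP/imsetP.
    move=> /andP [x2S /eqP ->]; exists x2 => //; by rewrite inE.
  by move=> [j]; rewrite inE => jS [-> ->]; rewrite jS eqxx.
rewrite card_imset; last by move=> x y [].
by rewrite [#|~: S|]cardsCs setCK card_ord.
Qed.

Lemma wex_pimk n (S : {set 'I_n}) : 1 < #|S| -> wex (pimk S) = 2.
Proof.
move=> cS.
have n0 : 0 < n by have := subset_leq_card (subsetT S); rewrite cardsT card_ord; lia.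
rewrite wexE //.
have -> : [set x : 'I_n | (x : nat) < ordS (pimk S x)] = [set x : 'I_n | (x:nat) < rot S x].
  by apply/setP => x; rewrite !inE pimkE ord_predK.
by rewrite exc_rot.
Qed.

Lemma wex2 n (pi : 'S_n) : 0 < n -> wex pi = 2 ->
  1 < #|[set x | ordS (pi x) != x]| /\ pi = pimk [set x | ordS (pi x) != x].
Proof.
move=> n0 w2.
have rinj : injective (fun x => ordS (pi x)).
  by move=> x y /ordS_inj /perm_inj.
have c1 : #|[set x : 'I_n | (x:nat) < ordS (pi x)]| = 1.
  by move: w2; rewrite wexE // => h; clear -h; lia.
have [cS E] := exc1_rot rinj c1; split => //.
by apply/permP => x; rewrite pimkE -E ordSK.
Qed.

Import GRing.Theory.
Local Open Scope ring_scope.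

Lemma sum_sets (R : fieldType) n (q : R) : (1 < n)%N ->
  \sum_(S : {set 'I_n} | (1 < #|S|)%N) q ^+ (#|S| - 2) =
  \sum_(i < n.-1) ('C(n, i.+2))%:R * q ^+ i.
Proof.
move=> n1.
have pl : forall S : {set 'I_n}, (#|S| - 2 < n.-1)%N.
  move=> S; have := subset_leq_card (subsetT S); rewrite cardsT card_ord; lia.
rewrite (partition_big (fun S : {set 'I_n} => Ordinal (pl S)) xpredT) //=.
apply: eq_bigr => i _.
rewrite (eq_bigl (fun S : {set 'I_n} => #|S| == i.+2)%N); last first.
  move=> S; rewrite -val_eqE /=.
  have := subset_leq_card (subsetT S); rewrite cardsT card_ord.
  have := ltn_ord i; lia.
rewrite (eq_bigr (fun _ => q ^+ i)); last first.
  by move=> S /eqP ->; rewrite subn2.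
rewrite sumr_const mulr_natl.
have := card_draws 'I_n i.+2; rewrite card_ord => <-.
congr (_ *+ _); apply: eq_card => S; by rewrite inE.
Qed.

Lemma suppE n (S : {set 'I_n}) x : (1 < #|S|)%N -> (x \in S) = (ordS (pimk S x) != x).
Proof.
move=> cS; rewrite pimkE ord_predK.
case xS: (x \in S).
  by apply/esym/eqP => E; apply: (rot_neq cS xS); rewrite E.
by rewrite rot_out ?xS // eqxx.
Qed.

Theorem mainTheorem11 (R : fieldType) (n : nat) (q : R) :
  (2 <= n)%N -> q != 0 ->
  hatEkn 2 n q = \sum_(i < n.-1) ('C(n, i.+2))%:R * q ^+ i.
Proof.
move=> n2 q0.
rewrite -sum_sets // /hatEkn /Ekn mulr_sumr.
pose P := [set S : {set 'I_n} | (1 < #|S|)%N].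
rewrite (eq_bigl (mem ((@pimk n) @: P))); last first.
  move=> pi /=; apply/eqP/imsetP.
    move=> w; have [cS E] := wex2 (ltnW n2) w.
    by exists [set x | ordS (pi x) != x]; rewrite ?inE.
  by move=> [S]; rewrite inE => cS ->; apply: wex_pimk.
rewrite big_imset /=; last first.
  move=> S1 S2; rewrite !inE => c1 c2 E.
  by apply/setP => x; rewrite (suppE x c1) (suppE x c2) E.
rewrite (eq_bigl (fun S : {set 'I_n} => (1 < #|S|)%N)); last by move=> S; rewrite inE.
apply: eq_bigr => S cS.
have Sn : (#|S| <= n)%N by have := subset_leq_card (subsetT S); rewrite cardsT card_ord.
rewrite al_pimk // -expfzDr //.
rewrite (_ : _ + _ = (#|S| - 2)%N :> int) //.
lia.
Qed.
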